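(* Let $\phi$ be a scoring rule such that there exists $g:[0,1]\to\mathbb{R}$ with $\phi(x,e_k)=g(x_k)$ for all $k\in\{1,\dots,K\}$ and all score vectors $x$. For each $k$ define $h_k(q):=-g(q)\,q$ (i.e. $h_k(p)=-\phi(p,e_k)p_k$, the $k$-th component of the negative entropy of $\phi$). Let $C=(C_1,\dots,C_K)$ with $C_k:=\mathbb{E}[Q_k\mid S_k]$. Then $$\mathrm{GL}(S):=\mathbb{E}[d_\phi(C,Q)]=\sum_{k=1}^K\mathbb{E}\big[\mathrm{Var}_{h_k}(Q_k\mid S_k)\big].$$
   Context: Let $(X,Y)$ be jointly distributed with $X\in\mathcal{X}$ and $Y\in\{e_1,\dots,e_K\}$ (one-hot vectors of $\mathbb{R}^K$); $Q_k:=P(Y=e_k\mid X)$; $S=(S_1,\dots,S_K)=f(X)$ in the probability simplex for a classifier $f$. For a scoring rule $\phi$, $s_\phi(P,q):=\sum_k\phi(P,e_k)q_k$ and $d_\phi(P,q):=s_\phi(P,q)-s_\phi(q,q)$. For $f:\mathbb{R}\to\mathbb{R}$, $\mathrm{Var}_f(U\mid V):=\mathbb{E}[f(U)\mid V]-f(\mathbb{E}[U\mid V])$. All required expectations are assumed to exist. *)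

(* Defs.v *)
From HB Require Import structures.
From mathcomp Require Import all_boot all_order all_algebra.
From mathcomp Require Import all_classical all_reals all_analysis.
Set Implicit Arguments. Unset Strict Implicit. Unset Printing Implicit Defensive.
Import Order.TTheory GRing.Theory Num.Theory.
Import numFieldNormedType.Exports.
Local Open Scope classical_set_scope.
Local Open Scope ring_scope.

Section Defs.
Context {R : realType}.

(* s_phi(P,q) := sum_k phi(P,e_k) q_k ; a scoring rule phi is represented as
   phi : ('I_K -> R) -> 'I_K -> R with  phi x k = phi(x, e_k). *)
Definition s_phi (K : nat) (phi : ('I_K -> R) -> 'I_K -> R)
  (P q : 'I_K -> R) : R := \sum_(k < K) phi P k * q k.

Definition d_phi (K : nat) (phi : ('I_K -> R) -> 'I_K -> R)
  (P q : 'I_K -> R) : R := s_phi phi P q - s_phi phi q q.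

(* Honest definition of (a version of) the conditional expectation
   E[U | V] for a real random variable U and a random variable V with values
   in a measurable space T' : W is sigma(V)-measurable (i.e. W = w o V with w
   measurable, Doob-Dynkin), integrable, and has the same integrals as U on
   every event of sigma(V). *)
Definition is_cond_exp {d} {T : measurableType d} {d'} {T' : measurableType d'}
  (P : probability T R) (V : T -> T') (U W : T -> R) : Prop :=
  P.-integrable setT (EFin \o U) /\
  P.-integrable setT (EFin \o W) /\
  (exists w : T' -> R, measurable_fun setT w /\ W = w \o V) /\
  (forall B : set T', measurable B ->
     (\int[P]_(x in V @^-1` B) (U x)%:E = \int[P]_(x in V @^-1` B) (W x)%:E)%E).

(* Var_f(U | V) := E[f(U) | V] - f(E[U | V]), given versions EfU of E[f(U)|V]
   and EU of E[U|V]. *)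
Definition Var_f {T : Type} (f : R -> R) (EfU EU : T -> R) : T -> R :=
  fun w => EfU w - f (EU w).

End Defs.

(* Main.v *)
Require Import Defs.
From HB Require Import structures.
From mathcomp Require Import all_boot all_order all_algebra.
From mathcomp Require Import all_classical all_reals all_analysis.
Import Order.TTheory GRing.Theory Num.Theory.
Import numFieldNormedType.Exports.
From mathcomp Require Import measurable_realfun.
Local Open Scope classical_set_scope.
Local Open Scope ring_scope.

Import HBNNSimple.
Section tower.
Context {R : realType} d (T : measurableType d) (mu : {measure set T -> \bar R}).
Context d' (T' : measurableType d') (S : T -> T') (mS : measurable_fun setT S).

Lemma mpre (A : set T') : measurable A -> measurable (S @^-1` A).
Proof. by move=> mA; rewrite -[_ @^-1` _]setTI; exact: mS. Qed.

Lemma simple_int (a : {nnsfun T' >-> R}) : exists n (c : 'I_n -> R) (A : 'I_n -> set T'),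
  (forall i, measurable (A i)) /\ forall V : T -> R,
  mu.-integrable setT (EFin \o V) ->
  (\int[mu]_x (a (S x) * V x)%:E =
  \sum_(i < n) (c i)%:E * \int[mu]_(x in S @^-1` A i) (V x)%:E)%E.
Proof.
have Ea := fimfunEord a; simpl in Ea; set s := (finmap.enum_fset _) in Ea.
exists (size s), (fun i => s`_i), (fun i => a @^-1` [set s`_i]); split.
  by move=> i; exact: measurable_funPTI.
move=> V iV.
have mA i : measurable (S @^-1` (a @^-1` [set s`_i])).
  by apply: mpre; exact: measurable_funPTI.
have E x : ((a (S x) * V x)%:E = \sum_(i < size s)
   ((s`_i)%:E * ((EFin \o V) \_ (S @^-1` (a @^-1` [set s`_i]))) x))%E.
  rewrite (Ea (S x)) mulr_suml -sumEFin.
  apply: eq_bigr => i _.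
  rewrite /patch indicE; case: ifPn => [/set_mem xin|/negP xin].
    by rewrite mem_set // mulr1 EFinM.
  rewrite memNset ?mulr0 ?mul0r ?mule0 //.
  by move=> h; apply: xin; exact: mem_set.
under eq_integral do rewrite E.
have iP i : mu.-integrable setT ((EFin \o V) \_ (S @^-1` (a @^-1` [set s`_i]))).
  apply/(integrable_mkcond _ (mA i)).1.
  exact: integrableS iV.
rewrite integral_sum //; last by move=> i; exact: integrableZl.
apply: eq_bigr => i _; rewrite integralZl //.
by rewrite -integral_mkcond.
Qed.

Lemma aux_bound (a b x : R) : 0 <= a -> 0 <= b -> a <= Num.max x 0 ->
  b <= Num.max (- x) 0 -> `|a - b| <= `|x|.
Proof.
move=> a0 b0; have [hx|hx] := leP 0 x.
  rewrite (ger0_norm hx).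
  have -> : Num.max (- x) 0 = 0 by apply/max_idPr; rewrite oppr_le0.
  move=> ax b0'; have -> : b = 0 by apply/le_anti; rewrite b0 b0'.
  by rewrite subr0 ger0_norm.
rewrite (ltr0_norm hx).
have nx : 0 <= - x by rewrite oppr_ge0 ltW.
have -> : Num.max (- x) 0 = - x by apply/max_idPl.
move=> a0' bx.
have -> : a = 0 by apply/le_anti; rewrite a0 a0'.
by rewrite sub0r normrN ger0_norm.
Qed.

Lemma aux_bound1 (a x : R) : 0 <= a -> a <= Num.max x 0 -> `|a| <= `|x|.
Proof.
move=> a0; have [hx|hx] := leP 0 x.
  by rewrite (ger0_norm hx) ger0_norm.
move=> a0'; have -> : a = 0 by apply/le_anti; rewrite a0 a0'.
by rewrite normr0.
Qed.

Lemma aux_lim (x : R) : Num.max x 0 - Num.max (- x) 0 = x.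
Proof.
have [hx|hx] := leP 0 x.
  have -> : Num.max (- x) 0 = 0 by apply/max_idPr; rewrite oppr_le0.
  by rewrite subr0.
have nx : 0 <= - x by rewrite oppr_ge0 ltW.
have -> : Num.max (- x) 0 = - x by apply/max_idPl.
by rewrite sub0r opprK.
Qed.

Lemma tower (U W : T -> R)
  (iU : mu.-integrable setT (EFin \o U)) (iW : mu.-integrable setT (EFin \o W))
  (HB : forall B, measurable B ->
     (\int[mu]_(x in S @^-1` B) (U x)%:E = \int[mu]_(x in S @^-1` B) (W x)%:E)%E)
  (h : T' -> R) (mh : measurable_fun setT h)
  (ihU : mu.-integrable setT (fun x => (h (S x) * U x)%:E))
  (ihW : mu.-integrable setT (fun x => (h (S x) * W x)%:E)) :
  (\int[mu]_x (h (S x) * U x)%:E = \int[mu]_x (h (S x) * W x)%:E)%E.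
Proof.
have simple (a : {nnsfun T' >-> R}) :
    (\int[mu]_x (a (S x) * U x)%:E = \int[mu]_x (a (S x) * W x)%:E)%E.
  have [n [c [A [mA HA]]]] := simple_int a.
  rewrite !HA //; apply: eq_bigr => i _; by rewrite HB.
have mf : measurable_fun setT (EFin \o h) by exact/measurable_EFinP.
pose fp := nnsfun_approx measurableT (measurable_funepos mf).
pose fn := nnsfun_approx measurableT (measurable_funeneg mf).
have fpE y : ((EFin \o h)^\+ y = (Num.max (h y) 0)%:E)%E.
  by rewrite funeposE /= EFin_max.
have fnE y : ((EFin \o h)^\- y = (Num.max (- h y) 0)%:E)%E.
  by rewrite funenegE /= EFin_max EFinN.
have fple n y : fp n y <= Num.max (h y) 0.
  rewrite -lee_fin -fpE /fp nnsfun_approxE; by apply: le_approx.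
have fnle n y : fn n y <= Num.max (- h y) 0.
  rewrite -lee_fin -fnE /fn nnsfun_approxE; by apply: le_approx.
have fp0 n y : 0 <= fp n y by [].
have fn0 n y : 0 <= fn n y by [].
pose gn n y := fp n y - fn n y.
have gnb n y : `|gn n y| <= `|h y|.
  by rewrite /gn; apply: aux_bound; [exact: fp0|exact: fn0|exact: fple|exact: fnle].
have fpb n y : `|fp n y| <= `|h y| by apply: aux_bound1; [exact: fp0|exact: fple].
have fnb n y : `|fn n y| <= `|h y|.
  by rewrite -(normrN (h y)); apply: aux_bound1; [exact: fn0|exact: fnle].
have mgn n : measurable_fun setT (gn n).
  exact: measurable_funB (measurable_funP (fp n)) (measurable_funP (fn n)).
have cgn y : gn n y @[n --> \oo] --> h y.
  have c1 := cvg_nnsfun_approx measurableT (measurable_funepos mf)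
    (fun t _ => funepos_ge0 _ t) (x := y) I.
  have c2 := cvg_nnsfun_approx measurableT (measurable_funeneg mf)
    (fun t _ => funeneg_ge0 _ t) (x := y) I.
  rewrite fpE in c1; rewrite fnE in c2.
  rewrite -[X in _ --> X]aux_lim.
  by apply: cvgB; [exact: fine_cvg c1|exact: fine_cvg c2].
have conv V (iV : mu.-integrable setT (EFin \o V))
    (ihV : mu.-integrable setT (fun x => (h (S x) * V x)%:E)) :
    (\int[mu]_x (gn n (S x) * V x)%:E @[n --> \oo] -->
     \int[mu]_x (h (S x) * V x)%:E)%E.
  have mV : measurable_fun setT V by exact/measurable_EFinP/(measurable_int _ iV).
  have H1 : forall n, measurable_fun setT (fun x => (gn n (S x) * V x)%:E).
    move=> n; apply/measurable_EFinP; apply: measurable_funM => //.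
    exact: measurableT_comp (mgn n) mS.
  have H2 : measurable_fun setT (fun x => (h (S x) * V x)%:E).
    exact: measurable_int ihV.
  have H3 : {ae mu, forall x, setT x -> (fun n => (gn n (S x) * V x)%:E) @ \oo
      --> (h (S x) * V x)%:E}.
    apply: aeW => x _; apply: cvg_EFin; first exact: nearW.
    exact: cvgMl (cgn (S x)).
  have H4 : mu.-integrable setT (abse \o (fun x => (h (S x) * V x)%:E)).
    exact: integrable_abse.
  have H5 : {ae mu, forall x n, setT x -> (`|(gn n (S x) * V x)%:E| <=
      (abse \o (fun x => (h (S x) * V x)%:E)) x)%E}.
    apply: aeW => x n _; change ((`|gn n (S x) * V x|)%:E <= (`|h (S x) * V x|)%:E)%E; rewrite lee_fin !normrM.
    by apply: ler_wpM2r => //; exact: gnb.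
  by case: (dominated_convergence measurableT H1 H2 H3 H4 H5).
have splitI V (iV : mu.-integrable setT (EFin \o V))
    (ihV : mu.-integrable setT (fun x => (h (S x) * V x)%:E)) n :
    (\int[mu]_x (gn n (S x) * V x)%:E =
     \int[mu]_x (fp n (S x) * V x)%:E - \int[mu]_x (fn n (S x) * V x)%:E)%E.
  have mV : measurable_fun setT V by exact/measurable_EFinP/(measurable_int _ iV).
  rewrite -integralB //.
  - by apply: eq_integral => x _; rewrite /gn mulrBl EFinB.
  - apply: (le_integrable measurableT) ihV.
      apply/measurable_EFinP; apply: measurable_funM => //.
      exact: measurableT_comp (measurable_funP (fp n)) mS.
    move=> x _; change ((`|fp n (S x) * V x|)%:E <= (`|h (S x) * V x|)%:E)%E.
    rewrite lee_fin !normrM.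
    by apply: ler_wpM2r => //; exact: fpb.
  - apply: (le_integrable measurableT) ihV.
      apply/measurable_EFinP; apply: measurable_funM => //.
      exact: measurableT_comp (measurable_funP (fn n)) mS.
    move=> x _; change ((`|fn n (S x) * V x|)%:E <= (`|h (S x) * V x|)%:E)%E.
    rewrite lee_fin !normrM.
    by apply: ler_wpM2r => //; exact: fnb.
have cU := conv U iU ihU.
have cW := conv W iW ihW.
have EE : (fun n => \int[mu]_x (gn n (S x) * U x)%:E)%E =
          (fun n => \int[mu]_x (gn n (S x) * W x)%:E)%E.
  by apply/funext => n; rewrite (splitI U) // (splitI W) // !simple.
rewrite EE in cU.
exact: (cvg_unique _ cU cW).
Qed.
End tower.

Theorem lemma5 (R : realType) (K : nat)
  (d : measure_display) (Omega : measurableType d) (P : probability Omega R)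
  (dX : measure_display) (XX : measurableType dX)
  (X : Omega -> XX) (Y : Omega -> 'I_K)
  (f : 'I_K -> XX -> R)
  (Q C : 'I_K -> Omega -> R)
  (g : R -> R) (phi : ('I_K -> R) -> 'I_K -> R) :
  (* the data *)
  measurable_fun setT X ->
  (forall k, measurable (Y @^-1` [set k])) ->
  (forall k, measurable_fun setT (f k)) ->
  (* f is a classifier: its output lies in the probability simplex *)
  (forall x k, 0 <= f k x) -> (forall x, \sum_(k < K) f k x = 1) ->
  (* Q_k = P(Y = e_k | X) *)
  (forall k, is_cond_exp P X (\1_(Y @^-1` [set k])) (Q k)) ->
  (* C_k = E[Q_k | S_k], where S_k = f_k(X) *)
  (forall k, is_cond_exp P (fun w => f k (X w)) (Q k) (C k)) ->
  (* phi(x, e_k) = g(x_k) *)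
  measurable_fun setT g ->
  (forall (x : 'I_K -> R) k, phi x k = g (x k)) ->
  (* the required expectations exist *)
  P.-integrable setT (fun w => (d_phi phi (fun k => C k w) (fun k => Q k w))%:E) ->
  (forall k, P.-integrable setT (fun w => (g (C k w) * Q k w)%:E)) ->
  (forall k, P.-integrable setT (fun w => (- g (C k w) * C k w)%:E)) ->
  (* for every version W_k of E[h_k(Q_k) | S_k], with h_k(q) = - g(q) q *)
  forall W : 'I_K -> Omega -> R,
  (forall k, is_cond_exp P (fun w => f k (X w)) (fun w => - g (Q k w) * Q k w) (W k)) ->
  (\int[P]_w (d_phi phi (fun k => C k w) (fun k => Q k w))%:E
   = \sum_(k < K) \int[P]_w (Var_f (fun q => - g q * q) (W k) (C k) w)%:E)%E.
Proof.
move=> hX hY hf hf0 hf1 hQ hC hg hphi iD iGQ iGC W hW.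
have iQQ k : P.-integrable setT (fun w => (- g (Q k w) * Q k w)%:E).
  by have [] := hW k.
have E1 w : (d_phi phi (fun k => C k w) (fun k => Q k w))%:E =
   (\sum_(k < K) ((g (C k w) * Q k w)%:E + (- g (Q k w) * Q k w)%:E))%E.
  rewrite (eq_bigr (fun k => (g (C k w) * Q k w + - g (Q k w) * Q k w)%:E));
    last by move=> k _; rewrite EFinD.
  rewrite sumEFin; congr EFin.
  rewrite /d_phi /s_phi big_split /= -sumrN; congr (_ + _).
    by apply: eq_bigr => k _; rewrite hphi.
  by apply: eq_bigr => k _; rewrite hphi mulNr.
under eq_integral do rewrite E1.
rewrite integral_sum //; last by move=> k; exact: integrableD.
apply: eq_bigr => k _.
rewrite integralD //.
have mS : measurable_fun setT (fun w => f k (X w)) by exact: measurableT_comp (hf k) hX.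
have [iQ [iC [[c [mc Ec]] HB]]] := hC k.
have [_ [iW [_ HBW]]] := hW k.
have iGC' : P.-integrable setT (fun w => (g (C k w) * C k w)%:E).
  apply: (@eq_integrable _ _ _ P setT measurableT
     (-%E \o (fun w => (- g (C k w) * C k w)%:E))); last exact: integrableN (iGC k).
  by move=> x _; rewrite /= mulNr opprK.
have e1 : (fun w => (g (C k w) * Q k w)%:E) =
          (fun w => ((g \o c) (f k (X w)) * Q k w)%:E).
  by apply/funext => w; rewrite Ec.
have e2 : (fun w => (g (C k w) * C k w)%:E) =
          (fun w => ((g \o c) (f k (X w)) * C k w)%:E).
  by apply/funext => w; rewrite {1}Ec.
have Tw := @tower R _ _ P _ _ (fun w => f k (X w)) mS (Q k) (C k) iQ iC HB (g \o c) (measurableT_comp hg mc).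
have eR : (fun w => (Var_f (fun q => - g q * q) (W k) (C k) w)%:E) =
          (fun w => (W k w)%:E + (g (C k w) * C k w)%:E)%E.
  by apply/funext => w; rewrite /Var_f -EFinD mulNr opprK.
rewrite eR integralD //.
have := HBW setT measurableT; rewrite preimage_setT => ->.
rewrite e1 e2 Tw; first by rewrite addeC.
- by rewrite -e1; exact: iGQ.
- by rewrite -e2.
Qed.
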